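(* Let $\mathfrak{A}$ be a $\sigma$-algebra (abstract, i.e. a $\sigma$-complete Boolean algebra) and let $\mathcal{S}_b(\mathbb{C},\mathfrak{A})$ be the set of all bounded complex spectral families in $\mathfrak{A}$. Then the map $f_\ast:\mathcal{S}_b(\mathbb{C},\mathfrak{A})\to C(\mathcal{Q}(\mathfrak{A}))$, $E\mapsto f_E$, is a bijection; consequently $\mathcal{S}_b(\mathbb{C},\mathfrak{A})$, equipped with the operations transported by $f_\ast$ (i.e. $E+F:=f_\ast^{-1}(f_E+f_F)$, $EF:=f_\ast^{-1}(f_Ef_F)$, $\alpha E:=f_\ast^{-1}(\alpha f_E)$, $E^\ast:=f_\ast^{-1}(\overline{f_E})$, $|E|:=\|f_E\|_\infty$), is an abelian $C^\ast$-algebra $\ast$-isomorphic to $C(\mathcal{Q}(\mathfrak{A}))$.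
   Context: Infima/suprema over real index sets in $\mathfrak{A}$ are computed along countable dense sets. A complex spectral family in $\mathfrak{A}$ is a map $E:\mathbb{R}^2\to\mathfrak{A}$ with (i) $E_{\lambda_1,\lambda_2}\wedge E_{\mu_1,\mu_2}=E_{\min\{\lambda_1,\mu_1\},\min\{\lambda_2,\mu_2\}}$; (ii) $\bigwedge_{\lambda_1<\mu_1,\lambda_2<\mu_2}E_{\mu_1,\mu_2}=E_{\lambda_1,\lambda_2}$; (iii) $\bigwedge_\lambda E_{\lambda,\lambda_2}=0=\bigwedge_\lambda E_{\lambda_1,\lambda}$ and $\bigvee_{\lambda_1,\lambda_2}E_{\lambda_1,\lambda_2}=1$; bounded means there are $m,b$ with $E=0$ whenever some coordinate is $\le m$ and $E=1$ when both coordinates are $\ge b$. The Stone spectrum $\mathcal{Q}(\mathfrak{A})$ is the set of maximal dual ideals (maximal nonempty upward closed subsets not containing $0$, closed under finite meets) with the topology generated by $\{\mathfrak{B}\mid a\in\mathfrak{B}\}$, $a\in\mathfrak{A}$. For such $E$, $f_E=f_{E,1}+if_{E,2}$ where $f_{E,1}(\mathfrak{B})=\inf\{\lambda\mid\exists\mu:E_{\lambda,\mu}\in\mathfrak{B}\}$ and $f_{E,2}(\mathfrak{B})=\inf\{\mu\mid\exists\lambda:E_{\lambda,\mu}\in\mathfrak{B}\}$. *)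

(* Defs.v *)
From HB Require Import structures.
From mathcomp Require Import all_boot all_order all_algebra.
From mathcomp Require Import complex.
From mathcomp Require Import all_classical all_reals.
Import Order.TTheory GRing.Theory Num.Theory.
Import ComplexField.

Set Implicit Arguments.
Unset Strict Implicit.
Unset Printing Implicit Defensive.

Local Open Scope ring_scope.
Local Open Scope classical_set_scope.
Local Open Scope complex_scope.

Section Defs.

(* A Boolean algebra is a complemented distributive lattice with top   *)
(* and bottom (ctbDistrLatticeType).                                   *)

Context {d : Order.disp_t} {A : ctbDistrLatticeType d}.

Definition is_lub (S : set A) (x : A) : Prop :=
  (forall y, S y -> (y <= x)%O) /\ (forall z, (forall y, S y -> (y <= z)%O) -> (x <= z)%O).

Definition is_glb (S : set A) (x : A) : Prop :=
  (forall y, S y -> (x <= y)%O) /\ (forall z, (forall y, S y -> (z <= y)%O) -> (z <= x)%O).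

(* every countable family has a supremum (hence, by complementation,   *)
(* also an infimum); we require both explicitly                       *)
Definition sigma_complete : Prop :=
  forall u : nat -> A, (exists x, is_lub (range u) x) /\ (exists x, is_glb (range u) x).

Context {R : realType}.

(* A complex spectral family: E : R^2 -> A, written curried. *)
Definition complex_spectral_family (E : R -> R -> A) : Prop :=
  [/\
      (forall l1 l2 m1 m2, (E l1 l2 `&` E m1 m2)%O = E (Num.min l1 m1) (Num.min l2 m2)),
      (* (ii) right continuity *)
      (forall l1 l2,
          is_glb [set E m1 m2 | m1 in [set m | l1 < m] & m2 in [set m | l2 < m]] (E l1 l2)),
      (forall l2, is_glb [set E l l2 | l in setT] \bot%O) /\
      (forall l1, is_glb [set E l1 l | l in setT] \bot%O)
    & is_lub [set E l1 l2 | l1 in setT & l2 in setT] \top%O].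

Definition bounded_spectral_family (E : R -> R -> A) : Prop :=
  exists m b : R,
    (forall l1 l2, (l1 <= m \/ l2 <= m) -> E l1 l2 = \bot%O) /\
    (forall l1 l2, (b <= l1 /\ b <= l2) -> E l1 l2 = \top%O).

Definition bounded_complex_spectral_family (E : R -> R -> A) : Prop :=
  complex_spectral_family E /\ bounded_spectral_family E.

Definition dual_ideal (B : set A) : Prop :=
  [/\ B !=set0,
      (forall a b, B a -> (a <= b)%O -> B b),
      ~ B \bot%O
    & (forall a b, B a -> B b -> B (a `&` b)%O)].

Definition maximal_dual_ideal (B : set A) : Prop :=
  dual_ideal B /\ (forall C, dual_ideal C -> B `<=` C -> C = B).

End Defs.

Definition stone_spectrum {d : Order.disp_t} (A : ctbDistrLatticeType d) : Type :=
  {B : set A | maximal_dual_ideal B}.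

Section Stone.
Context {d : Order.disp_t} {A : ctbDistrLatticeType d}.

(* The topology on Q(A) generated by the sets {B | a \in B}: a set O is *)
(* open iff each of its points lies in a finite intersection of such    *)
(* generating sets contained in O (empty intersection = whole space).   *)
Definition stone_open (O : set (stone_spectrum A)) : Prop :=
  forall x, O x -> exists s : seq A,
    (forall a, a \in s -> proj1_sig x a) /\
    (forall y : stone_spectrum A, (forall a, a \in s -> proj1_sig y a) -> O y).

Context {R : realType}.

Definition complex_open (U : set R[i]) : Prop :=
  forall z, U z -> exists2 e : R, 0 < e & forall w, `|w - z| < e%:C -> U w.

Definition stone_continuous (g : stone_spectrum A -> R[i]) : Prop :=
  forall U, complex_open U -> stone_open (g @^-1` U).

Definition fE1 (E : R -> R -> A) (B : stone_spectrum A) : R :=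
  inf [set l : R | exists mu : R, proj1_sig B (E l mu)].

Definition fE2 (E : R -> R -> A) (B : stone_spectrum A) : R :=
  inf [set mu : R | exists l : R, proj1_sig B (E l mu)].

Definition fE (E : R -> R -> A) (B : stone_spectrum A) : R[i] :=
  Complex (fE1 E B) (fE2 E B).

Definition sup_bounded (g : stone_spectrum A -> R[i]) : Prop :=
  exists M : R, forall x, `|g x| <= M%:C.

(* A set X of complex functions on Q(A) is a unital commutative          *)
(* C*-algebra of functions under pointwise operations, complex           *)
(* conjugation as involution and the sup norm: it contains the constants *)
(* 1 (and 0), is closed under +, *, scalar multiplication and conjugation,*)
(* all its elements have finite sup norm, and it is complete for the sup *)
(* norm.  (Commutativity, submultiplicativity and the C*-identity        *)
(* ||g^* g|| = ||g||^2 hold automatically for pointwise operations and   *)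
(* the sup norm.)                                                        *)
Definition function_Cstar_algebra (X : set (stone_spectrum A -> R[i])) : Prop :=
  [/\ X (fun=> 1) /\ X (fun=> 0),
      (forall f g, X f -> X g -> X (fun x => f x + g x)) /\
      (forall f g, X f -> X g -> X (fun x => f x * g x)),
      (forall (a : R[i]) f, X f -> X (fun x => a * f x)) /\
      (forall f, X f -> X (fun x => (f x)^*)),
      (forall f, X f -> sup_bounded f)
    & (forall u : nat -> stone_spectrum A -> R[i],
         (forall n, X (u n)) ->
         (forall e : R, 0 < e -> exists N, forall m n, (N <= m)%N -> (N <= n)%N ->
              forall x, `|u m x - u n x| < e%:C) ->
         exists2 g, X g & forall e : R, 0 < e -> exists N, forall n, (N <= n)%N ->
              forall x, `|u n x - g x| < e%:C)].

End Stone.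

(* Main.v *)
Require Import Defs.
From HB Require Import structures.
From mathcomp Require Import all_boot all_order all_algebra.
From mathcomp Require Import complex.
From mathcomp Require Import all_classical all_reals.
From mathcomp Require Import topology normedtype sequences.
From mathcomp Require Import ring lra.
Import Order.TTheory Order.CTBDistrLatticeTheory GRing.Theory Num.Theory.
Import ComplexField.
Import numFieldNormedType.Exports.
Local Open Scope ring_scope.
Local Open Scope classical_set_scope.
Local Open Scope complex_scope.
Section BA.
Context {d : Order.disp_t} {A : ctbDistrLatticeType d}.
Local Open Scope order_scope.
Implicit Types (B F : set A) (a b x y : A).

Lemma di_top {B} : dual_ideal B -> B \top.
Proof. by case=> -[x Bx] up _ _; apply: up Bx _; exact: lex1. Qed.

Lemma di_meetE {B} a b : dual_ideal B -> B (a `&` b) <-> B a /\ B b.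
Proof.
case=> _ up _ mI; split; last by case; exact: mI.
by move=> Bab; split; apply: up Bab _; rewrite ?leIl ?leIr.
Qed.

Lemma di_up {B} a b : dual_ideal B -> B a -> a <= b -> B b.
Proof. by case=> _ up _ _; exact: up. Qed.

Lemma di_nbot {B} : dual_ideal B -> ~ B \bot.
Proof. by case. Qed.

Lemma di_notboth {B} {a} : dual_ideal B -> B a -> B (~` a) -> False.
Proof.
move=> dB Ba Bc; apply: (di_nbot dB).
by rewrite -(meetxC a); apply/(di_meetE _ _ dB).
Qed.

Lemma di_bigmeet {B} (s : seq A) (f : A -> A) : dual_ideal B ->
  B (\meet_(x <- s) f x) <-> (forall x, x \in s -> B (f x)).
Proof.
move=> dB; elim: s => [|y s IH].
  by rewrite big_nil; split => // _; exact: di_top.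
rewrite big_cons (di_meetE _ _ dB) IH; split.
  by case=> Hy Hs x; rewrite inE => /orP[/eqP->|/Hs].
by move=> H; split => [|x xs]; apply: H; rewrite inE ?eqxx ?xs ?orbT.
Qed.

Lemma mdi_compl {B} {a} : maximal_dual_ideal B -> ~ B a -> B (~` a).
Proof.
move=> [dB maxB] nBa; apply: contrapT => nBc.
pose C := [set x | exists2 b, B b & b `&` a <= x].
have dC : dual_ideal C.
  split.
  - by exists a; exists \top; [exact: di_top | rewrite meet1x].
  - by move=> x y [b Bb bx] xy; exists b => //; exact: le_trans xy.
  - move=> [b Bb]; rewrite lex0 => /eqP bab; apply: nBc.
    apply: di_up Bb _ => //.
    by rewrite -[b](meetx1) -(joinxC a) meetUr bab join0x leIr.
  - move=> x y [b Bb bx] [c Bc cy]; exists (b `&` c).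
      by apply/(di_meetE _ _ dB).
    rewrite lexI; apply/andP; split.
      by apply: le_trans bx; rewrite leI2 // leIl.
    by apply: le_trans cy; rewrite leI2 // leIr.
have BC : B `<=` C by move=> x Bx; exists x => //; exact: leIl.
apply: nBa; rewrite -(maxB C dC BC); exists \top; [exact: di_top|].
by rewrite meet1x.
Qed.

Lemma mdi_join {B} a b : maximal_dual_ideal B -> B (a `|` b) -> B a \/ B b.
Proof.
move=> mB Bab; apply: contrapT => /not_orP[na nb].
have := mdi_compl mB na; have := mdi_compl mB nb => Hb Ha.
apply: (di_notboth mB.1 Bab); rewrite complU.
by apply/(di_meetE _ _ mB.1).
Qed.

Lemma UL {F} : dual_ideal F -> exists B, maximal_dual_ideal B /\ F `<=` B.
Proof.
move=> dF.
pose P := fun C : set A => C = set0 \/ (dual_ideal C /\ F `<=` C).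
have := @Zorn_bigcup A P.
case.
- move=> G GP tot.
  have [allE|] := pselect (forall X, G X -> X = set0).
    left; apply/seteqP; split=> x // [X GX]; by rewrite (allE X GX).
  move=> /existsNP [X0 /not_implyP [GX0 X0n]].
  have [//|[dX0 FX0]] := GP X0 GX0.
  right; split; last by move=> x Fx; exists X0 => //; exact: FX0.
  split.
  - by case: dX0 => -[x Xx] _ _ _; exists x; exists X0.
  - move=> a b [X GX Xa] ab; exists X => //.
    have [Xe|[dX _]] := GP X GX; first by move: Xa; rewrite Xe.
    exact: di_up Xa ab.
  - move=> [X GX Xb].
    have [Xe|[dX _]] := GP X GX; first by move: Xb; rewrite Xe.
    exact: di_nbot dX Xb.
  - move=> a b [X GX Xa] [Y GY Yb].
    have [XY|YX] := tot X Y GX GY.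
    + exists Y => //; have [Ye|[dY _]] := GP Y GY; first by move: Yb; rewrite Ye.
      by apply/(di_meetE _ _ dY); split => //; exact: XY.
    + exists X => //; have [Xe|[dX _]] := GP X GX; first by move: Xa; rewrite Xe.
      by apply/(di_meetE _ _ dX); split => //; exact: YX.
- move=> M [PM Mmax].
  have Mne : M <> set0.
    move=> M0; apply: (Mmax F); [|by right; split].
    rewrite M0; split; first by move=> x.
    case: dF => -[x Fx] _ _ _ H; exact: (H x Fx).
  have [//|[dM FM]] := PM.
  exists M; split => //; split => // C dC MC.
  apply: contrapT => CM; apply: (Mmax C); last by right; split => //; exact: subset_trans MC.
  split => // CsM; apply: CM; exact/seteqP.
Qed.

Lemma stone_sep a b : ~ (a <= b) -> exists B, [/\ maximal_dual_ideal B, B a & ~ B b].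
Proof.
move=> nab.
have dF : dual_ideal [set x | a `&` ~` b <= x].
  split.
  - by exists \top; exact: lex1.
  - by move=> x y /= h1 h2; exact: le_trans h2.
  - rewrite /= lex0 => /eqP H; apply: nab.
    by rewrite -[a](meetx1) -(joinxC b) meetUr H joinx0 leIr.
  - by move=> x y /= h1 h2; rewrite lexI h1 h2.
have [B [mB FB]] := UL dF.
exists B; split => //.
  by apply: di_up (FB _ (lexx _)) _ => //; [exact: mB.1 | exact: leIl].
move=> Bb; apply: (di_notboth mB.1 Bb).
by apply: di_up (FB _ (lexx _)) _ => //; [exact: mB.1 | exact: leIr].
Qed.

Lemma stone_le a b : (forall B, maximal_dual_ideal B -> B a -> B b) -> a <= b.
Proof.
move=> H; apply: contrapT => /stone_sep [B [mB Ba nBb]]; exact: nBb (H B mB Ba).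
Qed.

Lemma stone_compact (D : set A) :
  (forall B, maximal_dual_ideal B -> exists2 x, D x & B x) ->
  exists s : seq A, (forall x, x \in s -> D x) /\
    (forall B, maximal_dual_ideal B -> exists2 x, x \in s & B x).
Proof.
move=> cov; apply: contrapT => ncov.
pose F := [set x | exists2 s : seq A, (forall y, y \in s -> D y) &
                     \meet_(y <- s) ~` y <= x].
have dF : dual_ideal F.
  split.
  - by exists \top; exists [::] => //; rewrite big_nil.
  - by move=> x y [s Ds sx] xy; exists s => //; exact: le_trans xy.
  - move=> [s Ds]; rewrite lex0 => /eqP s0; apply: ncov; exists s; split => //.
    move=> B mB; apply: contrapT => nB.
    have : B (\meet_(y <- s) ~` y).
      apply/(di_bigmeet _ _ mB.1) => y ys; apply: mdi_compl => // By.
      by apply: nB; exists y.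
    by rewrite s0; exact: di_nbot mB.1.
  - move=> x y [s Ds sx] [t Dt ty]; exists (s ++ t).
      by move=> z; rewrite mem_cat => /orP[/Ds|/Dt].
    by rewrite big_cat /= leI2.
have [B [mB FB]] := UL dF.
have [x Dx Bx] := cov B mB.
apply: (di_notboth mB.1 Bx); apply: FB; exists [:: x].
  by move=> y; rewrite inE => /eqP->.
by rewrite big_cons big_nil meetx1.
Qed.

End BA.
Section CHelp.
Context {R : realType}.
Implicit Types (w z : R[i]) (r e : R).

Definition rn w : R := complex.Re `|w|.

Lemma rnE w : `|w| = (rn w)%:C.
Proof. by rewrite /rn normc_def. Qed.

Lemma rn_lt w e : (`|w| < e%:C) = (rn w < e).
Proof. by rewrite rnE ltcR. Qed.

Lemma rn_ge0 w : 0 <= rn w.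
Proof. rewrite -lecR -rnE; exact: normr_ge0. Qed.

Lemma RCD r1 r2 : (r1 + r2)%:C = r1%:C + r2%:C :> R[i].
Proof. by apply/eqP; rewrite eq_complex /= addr0 !eqxx. Qed.

Lemma RCM r1 r2 : (r1 * r2)%:C = r1%:C * r2%:C :> R[i].
Proof. by apply/eqP; rewrite eq_complex /= !mulr0 !mul0r subr0 addr0 !eqxx. Qed.

Lemma rnD w z : rn (w + z) <= rn w + rn z.
Proof. by rewrite -lecR RCD -!rnE ler_normD. Qed.

Lemma rnM w z : rn (w * z) = rn w * rn z.
Proof. by apply: complexI; rewrite RCM -!rnE normrM. Qed.

Lemma rnN w : rn (- w) = rn w.
Proof. by rewrite /rn normrN. Qed.

Lemma rnB w z : rn (w - z) = rn (z - w).
Proof. by rewrite -rnN opprB. Qed.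

Lemma rnJ w : rn (w^*)%C = rn w.
Proof. by rewrite /rn normcJ. Qed.

Lemma rnR r : rn r%:C = `|r|.
Proof.
apply: complexI; rewrite -rnE normc_def /= expr0n /= addr0.
by rewrite sqrtr_sqr.
Qed.

Lemma Re_le w : `|complex.Re w| <= rn w.
Proof. by rewrite -lecR -rnE normc_ge_Re. Qed.

Lemma Im_le w : `|complex.Im w| <= rn w.
Proof.
have := Re_le (w * 'i%C); rewrite ReiNIm normrN rnM.
suff -> : rn 'i%C = 1 by rewrite mulr1.
by rewrite /rn normc_def /= expr0n expr1n add0r sqrtr1.
Qed.

Lemma rn_le_ReIm w : rn w <= `|complex.Re w| + `|complex.Im w|.
Proof.
rewrite {1}[w]complexE.
apply: le_trans (rnD _ _) _; rewrite rnM rnR.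
suff -> : rn 'i%C = 1 by rewrite mul1r rnR.
by rewrite /rn normc_def /= expr0n expr1n add0r sqrtr1.
Qed.

End CHelp.
Section Spec.
Context {d : Order.disp_t} {A : ctbDistrLatticeType d} {R : realType}.
Local Notation S := (stone_spectrum A).
Implicit Types (f g : S -> R[i]).

Definition pcont g := forall (x : S) (e : R), 0 < e ->
  exists2 a : A, proj1_sig x a & forall y : S, proj1_sig y a -> rn (g y - g x) < e.

Lemma ptdi (x : S) : dual_ideal (proj1_sig x).
Proof. exact: (proj2_sig x).1. Qed.

Lemma ptmax (x : S) : maximal_dual_ideal (proj1_sig x).
Proof. exact: (proj2_sig x). Qed.

Lemma pcont_cont g : pcont g -> stone_continuous g.
Proof.
move=> pg U oU x Ux; have [e e0 He] := oU _ Ux; have [a xa Ha] := pg x e e0.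
exists [:: a]; split; first by move=> b; rewrite inE => /eqP->.
by move=> y Hy; apply: He; rewrite rn_lt; apply: Ha; apply: Hy; exact: mem_head.
Qed.

Lemma cont_pcont g : stone_continuous g -> pcont g.
Proof.
move=> cg x e e0.
have oU : complex_open [set w | rn (w - g x) < e].
  move=> z /= hz; exists (e - rn (z - g x)); first by rewrite subr_gt0.
  move=> w; rewrite rn_lt => hw.
  have := rnD (w - z) (z - g x); rewrite addrA subrK; lra.
have hx : [set w | rn (w - g x) < e] (g x) by rewrite /= subrr /rn normr0.
have [s [sx sy]] := cg _ oU x hx.
exists (\meet_(a <- s) a)%O.
  by apply/(di_bigmeet s (fun a => a) (ptdi x)).
move=> y hy; apply: (sy y) => a0 as0.
by have := (di_bigmeet s (fun a => a) (ptdi y)).1 hy a0 as0.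
Qed.

Lemma pcont_const c : pcont (fun=> c).
Proof.
move=> x e e0; exists \top%O; first exact: di_top (ptdi x).
by move=> y _; rewrite subrr /rn normr0.
Qed.

Lemma pcont_add f g : pcont f -> pcont g -> pcont (fun x => f x + g x).
Proof.
move=> pf pg x e e0.
have e2 : 0 < e / 2 by rewrite divr_gt0.
have [a1 xa1 H1] := pf x _ e2; have [a2 xa2 H2] := pg x _ e2.
exists (a1 `&` a2)%O; first by apply/(di_meetE _ _ (ptdi x)).
move=> y /(di_meetE _ _ (ptdi y)) [ya1 ya2].
have -> : f y + g y - (f x + g x) = (f y - f x) + (g y - g x) by ring.
have := rnD (f y - f x) (g y - g x); have := H1 y ya1; have := H2 y ya2; lra.
Qed.

Lemma pcont_mul f g : pcont f -> pcont g -> pcont (fun x => f x * g x).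
Proof.
move=> pf pg x e e0.
set K := rn (g x) + rn (f x) + 1.
have K0 : 0 < K by have := rn_ge0 (g x); have := rn_ge0 (f x); rewrite /K; lra.
set dl := Num.min 1 (e / (2 * K)).
have dl0 : 0 < dl by rewrite lt_min ltr01 /= divr_gt0 // mulr_gt0.
have dl1 : dl <= 1 by rewrite ge_min lexx.
have dlK : dl * K <= e / 2.
  have : dl <= e / (2 * K) by rewrite ge_min lexx orbT.
  rewrite ler_pdivlMr ?mulr_gt0 //; lra.
have [a1 xa1 H1] := pf x _ dl0; have [a2 xa2 H2] := pg x _ dl0.
exists (a1 `&` a2)%O; first by apply/(di_meetE _ _ (ptdi x)).
move=> y /(di_meetE _ _ (ptdi y)) [ya1 ya2].
have -> : f y * g y - f x * g x = (f y - f x) * g y + f x * (g y - g x) by ring.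
have := rnD ((f y - f x) * g y) (f x * (g y - g x)); rewrite !rnM.
have := H1 y ya1; have := H2 y ya2.
have := rnD (g y - g x) (g x); rewrite subrK.
have := rn_ge0 (f y - f x); have := rn_ge0 (g y - g x); have := rn_ge0 (f x).
have := rn_ge0 (g y); have := rn_ge0 (g x).
set u := rn (f y - f x); set v := rn (g y); set w := rn (g y - g x).
set p := rn (f x); set q := rn (g x).
move: dlK; rewrite /K -/p -/q => dlK.
move=> q0 v0 p0 w0 u0 vle wlt ult tri.
have h1 : u * v <= dl * (q + 1).
  apply: ler_pM => //; [exact: ltW|lra].
have h2 : p * w <= p * dl by apply: ler_wpM2l => //; exact: ltW.
lra.
Qed.

Lemma conjcB (a b : R[i]) : (a - b)^*%C = (a^*%C - b^*%C).
Proof. by case: a => a1 a2; case: b => b1 b2; apply/eqP; rewrite eq_complex /= opprD !eqxx. Qed.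

Lemma pcont_conj f : pcont f -> pcont (fun x => (f x)^*%C).
Proof.
move=> pf x e e0; have [a xa H] := pf x e e0; exists a => // y ya.
by rewrite -conjcB rnJ; exact: H.
Qed.

Lemma pcont_bounded g : pcont g -> sup_bounded g.
Proof.
move=> pg.
pose D := [set a : A | exists M, forall y : S, proj1_sig y a -> rn (g y) <= M].
have [|s [sD scov]] := @stone_compact _ A D.
  move=> B mB; pose x := exist _ B mB : S.
  have [a xa Ha] := pg x 1 ltr01; exists a => //.
  exists (rn (g x) + 1) => y ya; have := Ha y ya.
  have := rnD (g y - g x) (g x); rewrite subrK; lra.
have [M HM] : exists M, forall a, a \in s -> forall y : S, proj1_sig y a -> rn (g y) <= M.
  elim: s sD {scov} => [|a s IH] sD; first by exists 0.
  have [M1 H1] := sD a (mem_head _ _).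
  have sD' : forall z, z \in s -> D z by move=> z zs; apply: sD; rewrite inE zs orbT.
  have [M2 H2] := IH sD'.
  exists (Num.max M1 M2) => b; rewrite inE => /orP[/eqP->|bs] y yb.
    by rewrite le_max H1.
  by rewrite le_max (H2 b bs y yb) orbT.
exists M => x; have [a as0 xa] := scov _ (ptmax x).
by rewrite rnE lecR; exact: HM xa.
Qed.

End Spec.
Section RealCauchy.
Context {R : realType}.

Lemma real_cauchy (a : nat -> R) :
  (forall e : R, 0 < e -> exists N, forall m n, (N <= m)%N -> (N <= n)%N -> `|a m - a n| < e) ->
  exists l : R, forall (e : R) N, (forall m n, (N <= m)%N -> (N <= n)%N -> `|a m - a n| < e) ->
     forall n, (N <= n)%N -> `|a n - l| <= e.
Proof.
move=> ca.
have cc : cauchy (a @ \oo).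
  apply: cauchy_exP => eps eps0; have [N HN] := ca eps eps0.
  exists (a N); exists N => // n /= Nn; exact: HN.
have cv : cvg (a @ \oo) by apply: cauchy_cvg.
exists (lim (a @ \oo)) => e N HN n Nn.
rewrite leNgt; apply/negP => hlt.
set dl := `|a n - lim (a @ \oo)| - e.
have dl0 : 0 < dl by rewrite subr_gt0.
have := (cvgrPdist_lt _ _).1 cv dl dl0.
case=> K _ HK.
have := HK (maxn N K) (leq_maxr _ _); rewrite /=.
have := HN n (maxn N K) Nn (leq_maxl _ _).
move=> h1 h2.
have := ler_normD (a n - a (maxn N K)) (a (maxn N K) - lim (a @ \oo)).
rewrite addrA subrK distrC in h2 *.
rewrite /dl in h2 *; lra.
Qed.
End RealCauchy.
Section Complete.
Context {d : Order.disp_t} {A : ctbDistrLatticeType d} {R : realType}.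
Local Notation S := (stone_spectrum A).

Lemma ReB (a b : R[i]) : complex.Re (a - b) = complex.Re a - complex.Re b.
Proof. by case: a; case: b. Qed.
Lemma ImB (a b : R[i]) : complex.Im (a - b) = complex.Im a - complex.Im b.
Proof. by case: a; case: b. Qed.

Lemma complete_pcont (u : nat -> S -> R[i]) : (forall n, pcont (u n)) ->
  (forall e : R, 0 < e -> exists N, forall m n, (N <= m)%N -> (N <= n)%N ->
              forall x, rn (u m x - u n x) < e) ->
  exists2 g, pcont g & forall e : R, 0 < e -> exists N, forall n, (N <= n)%N ->
              forall x, rn (u n x - g x) < e.
Proof.
move=> pu cu.
have cRe : forall x, exists l : R, forall (e : R) N,
    (forall m n, (N <= m)%N -> (N <= n)%N -> `|complex.Re (u m x) - complex.Re (u n x)| < e) ->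
     forall n, (N <= n)%N -> `|complex.Re (u n x) - l| <= e.
  move=> x; apply: real_cauchy => e e0; have [N HN] := cu e e0.
  exists N => m n Nm Nn; rewrite -ReB; apply: le_lt_trans (Re_le _) _; exact: HN.
have cIm : forall x, exists l : R, forall (e : R) N,
    (forall m n, (N <= m)%N -> (N <= n)%N -> `|complex.Im (u m x) - complex.Im (u n x)| < e) ->
     forall n, (N <= n)%N -> `|complex.Im (u n x) - l| <= e.
  move=> x; apply: real_cauchy => e e0; have [N HN] := cu e e0.
  exists N => m n Nm Nn; rewrite -ImB; apply: le_lt_trans (Im_le _) _; exact: HN.
have [L1 HL1] := choice cRe; have [L2 HL2] := choice cIm.
pose g x := Complex (L1 x) (L2 x).
have ug : forall e : R, 0 < e -> exists N, forall n, (N <= n)%N ->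
              forall x, rn (u n x - g x) < e.
  move=> e e0; have e4 : 0 < e / 4 by rewrite divr_gt0.
  have [N HN] := cu _ e4; exists N => n Nn x.
  apply: le_lt_trans (rn_le_ReIm _) _.
  have h1' : `|complex.Re (u n x) - L1 x| <= e / 4.
    apply: HL1 Nn => m k Nm Nk; rewrite -ReB; apply: le_lt_trans (Re_le _) _; exact: HN.
  have h2' : `|complex.Im (u n x) - L2 x| <= e / 4.
    apply: HL2 Nn => m k Nm Nk; rewrite -ImB; apply: le_lt_trans (Im_le _) _; exact: HN.
  rewrite ReB ImB /=; lra.
exists g => // x e e0.
have e3 : 0 < e / 3 by rewrite divr_gt0.
have [N HN] := ug _ e3; have [a xa Ha] := pu N x _ e3.
exists a => // y ya.
have -> : g y - g x = (g y - u N y) + ((u N y - u N x) + (u N x - g x)) by ring.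
have := rnD (g y - u N y) ((u N y - u N x) + (u N x - g x)).
have := rnD (u N y - u N x) (u N x - g x).
have hx := HN N (leqnn _) x.
have hy : rn (g y - u N y) < e / 3 by rewrite rnB; exact: HN.
have := Ha y ya; lra.
Qed.
End Complete.
Arguments pcont_add {d A R f g}.
Arguments pcont_mul {d A R f g}.
Arguments pcont_conj {d A R f}.
Arguments pcont_bounded {d A R g}.
Arguments cont_pcont {d A R g}.
Arguments pcont_cont {d A R g}.
Arguments complete_pcont {d A R u}.
Lemma cstar_part {d : Order.disp_t} {A : ctbDistrLatticeType d} {R : realType} :
  function_Cstar_algebra (@stone_continuous d A R).
Proof.
split.
- by split; apply: pcont_cont; exact: pcont_const.
- split => f g cf cg; apply: pcont_cont.
    exact: pcont_add (cont_pcont cf) (cont_pcont cg).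
  exact: pcont_mul (cont_pcont cf) (cont_pcont cg).
- split.
    move=> a f cf; apply: pcont_cont.
    exact: (pcont_mul (pcont_const a) (cont_pcont cf)).
  by move=> f cf; apply: pcont_cont; exact: pcont_conj (cont_pcont cf).
- by move=> f cf; exact: pcont_bounded (cont_pcont cf).
- move=> u Xu cu.
  have [|g pg ug] := complete_pcont (fun n => cont_pcont (Xu n)).
    move=> e e0; have [N HN] := cu e e0; exists N => m n Nm Nn x.
    by rewrite -rn_lt; exact: HN.
  exists g; first exact: pcont_cont.
  move=> e e0; have [N HN] := ug e e0; exists N => n Nn x.
  by rewrite rn_lt; exact: HN.
Qed.
Section FE.
Context {d : Order.disp_t} {A : ctbDistrLatticeType d} {R : realType}.
Local Notation S := (stone_spectrum A).
Variables (E : R -> R -> A) (m b : R).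
Hypothesis Hi : forall l1 l2 m1 m2, (E l1 l2 `&` E m1 m2)%O = E (Num.min l1 m1) (Num.min l2 m2).
Hypothesis Hm : forall l1 l2, (l1 <= m \/ l2 <= m) -> E l1 l2 = \bot%O.
Hypothesis Hb : forall l1 l2, (b <= l1 /\ b <= l2) -> E l1 l2 = \top%O.

Lemma Emono l1 l2 m1 m2 : l1 <= m1 -> l2 <= m2 -> (E l1 l2 <= E m1 m2)%O.
Proof. by move=> h1 h2; apply/meet_idPl; rewrite Hi !min_l. Qed.

Lemma Eb l mu : l <= b -> b <= mu -> E l mu = E l b.
Proof.
move=> lb bmu; rewrite -[E l mu]meetx1 -(Hb b b (conj (lexx b) (lexx b))).
by rewrite Hi (min_l lb) (min_r bmu).
Qed.

Let S1 (x : S) := [set l | exists mu, proj1_sig x (E l mu)].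

Lemma S1_lb (x : S) : lbound (S1 x) m.
Proof.
move=> l [mu xl]; rewrite leNgt; apply/negP => lm.
by move: xl; rewrite Hm; [exact: di_nbot (ptdi x) | left; exact: ltW].
Qed.

Lemma S1_b (x : S) : S1 x b.
Proof. by exists b; rewrite Hb ?lexx //; exact: di_top (ptdi x). Qed.

Lemma fE1_le (x : S) l mu : proj1_sig x (E l mu) -> fE1 E x <= l.
Proof.
move=> xl; apply: ge_inf; last by exists mu.
by exists m; exact: S1_lb.
Qed.

Lemma fE1_le_b (x : S) : fE1 E x <= b.
Proof. by case: (S1_b x) => mu; exact: fE1_le. Qed.

Lemma fE1_gt (x : S) l : fE1 E x < l -> exists mu, proj1_sig x (E l mu).
Proof.
move=> /(inf_lt (ex_intro _ b (S1_b x))) [y [mu xy] yl].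
exists mu; apply: di_up xy _; first exact: ptdi.
by apply: Emono => //; exact: ltW.
Qed.

Lemma fE1_ge (x : S) l : l <= b -> proj1_sig x (~` E l b)%O -> l <= fE1 E x.
Proof.
move=> lb xc; apply: lb_le_inf; first by exists b; exact: S1_b.
move=> l' [mu xl']; rewrite leNgt; apply/negP => l'l.
apply: (di_notboth (ptdi x) _ xc); apply: di_up xl' _; first exact: ptdi.
have hb : b <= Num.max mu b by rewrite le_max lexx orbT.
rewrite -(Eb _ _ lb hb).
by apply: Emono; [exact: ltW | rewrite le_max lexx].
Qed.

Lemma fE1_nbhd (x : S) e : 0 < e ->
  exists2 a, proj1_sig x a & forall y : S, proj1_sig y a -> `|fE1 E y - fE1 E x| < e.
Proof.
move=> e0.
have e2 : 0 < e / 2 by rewrite divr_gt0.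
have hlt : fE1 E x < fE1 E x + e / 2 by rewrite ltrDl.
have [mu xmu] := fE1_gt x _ hlt.
set l1 := fE1 E x - e / 2.
have l1b : l1 <= b by have := fE1_le_b x; rewrite /l1; lra.
have xc : proj1_sig x (~` E l1 b)%O.
  apply: mdi_compl; first exact: ptmax.
  move=> /fE1_le; rewrite /l1; lra.
exists (E (fE1 E x + e / 2) mu `&` ~` E l1 b)%O; first by apply/(di_meetE _ _ (ptdi x)).
move=> y /(di_meetE _ _ (ptdi y)) [ya yc].
have := fE1_le _ _ _ ya; have := fE1_ge _ _ l1b yc; rewrite /l1 => h1 h2.
rewrite ltr_norml; apply/andP; split; lra.
Qed.

End FE.
Section Main1.
Context {d : Order.disp_t} {A : ctbDistrLatticeType d} {R : realType}.
Local Notation S := (stone_spectrum A).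

Lemma bcsf_parts (E : R -> R -> A) : bounded_complex_spectral_family E ->
  exists m b : R,
   [/\ forall l1 l2 m1 m2, (E l1 l2 `&` E m1 m2)%O = E (Num.min l1 m1) (Num.min l2 m2),
       forall l1 l2, (l1 <= m \/ l2 <= m) -> E l1 l2 = \bot%O,
       forall l1 l2, (b <= l1 /\ b <= l2) -> E l1 l2 = \top%O &
    [/\  forall l1 l2 m1 m2, (E l2 l1 `&` E m2 m1)%O = E (Num.min l2 m2) (Num.min l1 m1),
       forall l1 l2, (l1 <= m \/ l2 <= m) -> E l2 l1 = \bot%O &
       forall l1 l2, (b <= l1 /\ b <= l2) -> E l2 l1 = \top%O]].
Proof.
move=> [[Hi _ _ _] [m [b [Hm Hb]]]]; exists m, b; split => //; split => //.
- by move=> l1 l2 h; apply: Hm; case: h; [right|left].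
- by move=> l1 l2 [h1 h2]; apply: Hb.
Qed.

Lemma fE_cont (E : R -> R -> A) : bounded_complex_spectral_family E ->
  stone_continuous (fE E).
Proof.
move=> /bcsf_parts [m [b [Hi Hm Hb [Hi' Hm' Hb']]]].
apply: pcont_cont => x e e0.
have e2 : 0 < e / 2 by rewrite divr_gt0.
have [a1 xa1 H1] := fE1_nbhd _ _ _ Hi Hm Hb x _ e2.
have [a2 xa2 H2] := fE1_nbhd (fun a c => E c a) _ _ Hi' Hm' Hb' x _ e2.
exists (a1 `&` a2)%O; first by apply/(di_meetE _ _ (ptdi x)).
move=> y /(di_meetE _ _ (ptdi y)) [ya1 ya2].
have h1 := H1 y ya1.
have h2 : `|fE2 E y - fE2 E x| < e / 2 := H2 y ya2.
apply: le_lt_trans (rn_le_ReIm _) _; rewrite ReB ImB /=; lra.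
Qed.

Lemma fE_inj (E F : R -> R -> A) :
  bounded_complex_spectral_family E -> bounded_complex_spectral_family F ->
  fE E = fE F -> E = F.
Proof.
move=> bE bF eqEF.
suff le : forall E F : R -> R -> A, bounded_complex_spectral_family E ->
   bounded_complex_spectral_family F -> fE E = fE F -> forall l1 l2, (E l1 l2 <= F l1 l2)%O.
  by apply/funext => l1; apply/funext => l2; apply/le_anti; rewrite !le.
move=> {bE bF eqEF E F} E F bE bF eqEF l1 l2.
have [_ Fii _ _] := bF.1.
have [_ Fglb] := Fii l1 l2; apply: Fglb => _ [m1 hm1 [m2 hm2 <-]].
apply: stone_le => B mB BE; pose x := exist _ B mB : S.
have [m [b [Hi Hm Hb [Hi' Hm' Hb']]]] := bcsf_parts _ bE.
have [m' [b' [Fi Fm Fb [Fi' Fm' Fb']]]] := bcsf_parts _ bF.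
have e1 : fE1 E x = fE1 F x by have := congr1 (fun h => complex.Re (h x)) eqEF.
have e2 : fE2 E x = fE2 F x by have := congr1 (fun h => complex.Im (h x)) eqEF.
have h1 : fE1 E x <= l1 := fE1_le _ _ Hm x _ _ BE.
have h2 : fE2 E x <= l2 := fE1_le (fun a c => E c a) _ Hm' x _ _ BE.
have g1 : fE1 F x < m1 by rewrite -e1; exact: le_lt_trans h1 _.
have g2 : fE2 F x < m2 by rewrite -e2; exact: le_lt_trans h2 _.
have [mu Bmu] := fE1_gt _ _ Fi Fb x m1 g1.
have [la Bla] := fE1_gt (fun a c => F c a) _ Fi' Fb' x m2 g2.
have : B (F m1 mu `&` F la m2)%O by apply/(di_meetE _ _ mB.1).
move=> /di_up; apply; first exact: mB.1.
by rewrite Fi; apply: (Emono _ Fi); rewrite ge_min lexx ?orbT.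
Qed.

End Main1.
Lemma arch2 {R : realType} (e : R) : 0 < e -> exists n : nat, 2 * (n.+1%:R)^-1 < e.
Proof.
move=> e0; exists (Num.truncn (2 / e)); move: (truncnS_gt (2 / e)).
move: ((Num.truncn (2 / e)).+1%:R) => N h.
have N0 : 0 < N by apply: (lt_trans _ h); rewrite divr_gt0.
by rewrite ltr_pdivrMr // mulrC -ltr_pdivrMr.
Qed.

Lemma mdi_bigjoin {d : Order.disp_t} {A : ctbDistrLatticeType d} {B : set A}
  (s : seq A) (P : pred A) : maximal_dual_ideal B ->
  B (\join_(i <- s | P i) i)%O -> exists2 i, i \in s & P i /\ B i.
Proof.
move=> mB; elim: s => [|a s IH]; first by rewrite big_nil => /(di_nbot mB.1).
rewrite big_cons; case: ifP => Pa.
  case/(mdi_join _ _ mB) => [Ba|/IH [i is0 Hi]]; first by exists a; rewrite ?mem_head.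
  by exists i => //; rewrite inE is0 orbT.
by move=> /IH [i is0 Hi]; exists i => //; rewrite inE is0 orbT.
Qed.

Lemma inf_eq {R : realType} (P : set R) (v : R) :
  (forall l, v < l -> P l) -> (forall l, P l -> v <= l) -> inf P = v.
Proof.
move=> H1 H2.
have ne : P !=set0 by exists (v + 1); apply: H1; rewrite ltrDl.
have lb : has_lbound P by exists v.
apply/le_anti; rewrite lb_le_inf // andbT.
rewrite leNgt; apply/negP => vi.
have := ge_inf lb (H1 ((v + inf P) / 2) _); first by lra.
Qed.

Section Surj.
Context {d : Order.disp_t} {A : ctbDistrLatticeType d} {R : realType}.
Local Notation S := (stone_spectrum A).
Variables (h : S -> R) (M : R).
Hypothesis hc : forall (x : S) (e : R), 0 < e ->
  exists2 a : A, proj1_sig x a & forall y : S, proj1_sig y a -> `|h y - h x| < e.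
Hypothesis hM : forall x, `|h x| <= M.

Lemma sep p q : p < q -> exists c : A,
  (forall x : S, h x <= p -> proj1_sig x c) /\ (forall x : S, proj1_sig x c -> h x < q).
Proof.
move=> pq.
pose D := [set a : A | (forall y : S, proj1_sig y a -> h y < q) \/
                       (forall y : S, proj1_sig y a -> p < h y)].
have [|s [sD scov]] := @stone_compact _ A D.
  move=> B mB; pose x := exist _ B mB : S.
  have [hq|hq] := ltP (h x) q.
    have e1 : 0 < q - h x by rewrite subr_gt0.
    have [a xa Ha] := hc x _ e1.
    exists a => //; left => y ya; have := Ha y ya; rewrite ltr_norml; lra.
  have e1 : 0 < h x - p by rewrite subr_gt0; lra.
  have [a xa Ha] := hc x _ e1.
  exists a => //; right => y ya; have := Ha y ya; rewrite ltr_norml; lra.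
pose P := fun a : A => `[< forall y : S, proj1_sig y a -> h y < q >].
exists (\join_(a <- s | P a) a)%O; split.
  move=> x hx; have [a as0 xa] := scov _ (ptmax x).
  case: (sD a as0) => Ha; last by have := Ha x xa; lra.
  apply: di_up xa _; first exact: ptdi.
  by apply: (joins_sup_seq (fun i => i) as0); apply/asboolP.
move=> x /(mdi_bigjoin _ _ (ptmax x)) [a as0 [/asboolP Pa xa]]; exact: Pa.
Qed.

End Surj.
Section Surj2.
Context {d : Order.disp_t} {A : ctbDistrLatticeType d} {R : realType}.
Local Notation S := (stone_spectrum A).
Variables (h : S -> R) (M : R).
Hypothesis hM : forall x, `|h x| <= M.
Variables (c : R -> R -> A) (glb : (nat -> A) -> A).
Hypothesis Hc : forall p q, p < q ->
  (forall x : S, h x <= p -> proj1_sig x (c p q)) /\ (forall x : S, proj1_sig x (c p q) -> h x < q).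
Hypothesis glbP : forall u, is_glb (range u) (glb u).

Let dl (n : nat) : R := (n.+1%:R)^-1.
Let dl0 n : 0 < dl n. Proof. by rewrite /dl invr_gt0 ltr0n. Qed.

Definition E1c (l : R) : A := glb (fun n => c (l + dl n) (l + 2 * dl n)).

Lemma cmono p1 q1 p2 q2 : p1 < q1 -> p2 < q2 -> q1 <= p2 -> (c p1 q1 <= c p2 q2)%O.
Proof.
move=> h1 h2 h3; apply: stone_le => B mB Bc; pose x := exist _ B mB : S.
apply: ((Hc _ _ h2).1 x); apply: ltW; apply: lt_le_trans h3; exact: ((Hc _ _ h1).2 x).
Qed.

Lemma E1_lb l n : (E1c l <= c (l + dl n) (l + 2 * dl n))%O.
Proof. by apply: (glbP _).1; exists n. Qed.

Lemma E1_L1 l p q : l < p -> p < q -> (E1c l <= c p q)%O.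
Proof.
move=> lp pq; have pl : 0 < p - l by rewrite subr_gt0.
have [n hn0] := arch2 _ pl.
have hn : 2 * dl n < p - l := hn0.
apply: le_trans (E1_lb l n) _; apply: cmono => //.
  by have := dl0 n; lra.
lra.
Qed.

Lemma E1_L2 l p q : p < q -> q <= l -> (c p q <= E1c l)%O.
Proof.
move=> pq ql; apply: (glbP _).2 => _ [n _ <-]; apply: cmono => //;
  have := dl0 n; lra.
Qed.

Lemma E1_mono l l' : l <= l' -> (E1c l <= E1c l')%O.
Proof.
move=> ll'; apply: (glbP _).2 => _ [n _ <-]; apply: E1_L1; have := dl0 n; lra.
Qed.

Lemma E1_rc l z : (forall l', l < l' -> (z <= E1c l')%O) -> (z <= E1c l)%O.
Proof.
move=> H; apply: (glbP _).2 => _ [n _ <-].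
apply: le_trans (H (l + dl n / 2) _) _; first by have := dl0 n; lra.
apply: E1_L1; have := dl0 n; lra.
Qed.

Lemma E1_mem_le (x : S) l : proj1_sig x (E1c l) -> h x <= l.
Proof.
move=> xl; rewrite leNgt; apply/negP => lt.
have hl : 0 < h x - l by rewrite subr_gt0.
have [n hn0] := arch2 _ hl.
have hn : 2 * dl n < h x - l := hn0.
have : proj1_sig x (c (l + dl n) (l + 2 * dl n)).
  by apply: di_up xl (E1_lb l n); exact: ptdi.
have := dl0 n => d0.
have pq : l + dl n < l + 2 * dl n by lra.
move=> /(Hc _ _ pq).2; lra.
Qed.

Lemma E1_mem_gt (x : S) l : h x < l -> proj1_sig x (E1c l).
Proof.
move=> hl; have r1 : (h x + l) / 2 < l by lra.
apply: di_up (E1_L2 _ _ _ r1 (lexx l)); first exact: ptdi.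
apply: (Hc _ _ r1).1; lra.
Qed.

Lemma E1_bot l : l < - M -> E1c l = \bot%O.
Proof.
move=> lM; apply/eqP; rewrite -lex0; apply: stone_le => B mB Bl.
pose x := exist _ B mB : S; have := E1_mem_le x l Bl.
have := hM x; rewrite ler_norml => /andP[h1 h2]; lra.
Qed.

Lemma E1_top l : M < l -> E1c l = \top%O.
Proof.
move=> lM; apply/eqP; rewrite -le1x; apply: stone_le => B mB _.
pose x := exist _ B mB : S; apply: (E1_mem_gt x).
have := hM x; rewrite ler_norml => /andP[h1 h2]; lra.
Qed.

End Surj2.
Section Surj3.
Context {d : Order.disp_t} {A : ctbDistrLatticeType d} {R : realType}.
Local Notation S := (stone_spectrum A).

Lemma real_sep (h : S -> R) (hc : forall (x : S) (e : R), 0 < e ->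
  exists2 a : A, proj1_sig x a & forall y : S, proj1_sig y a -> `|h y - h x| < e) :
  exists c : R -> R -> A, forall p q, p < q ->
  (forall x : S, h x <= p -> proj1_sig x (c p q)) /\ (forall x : S, proj1_sig x (c p q) -> h x < q).
Proof.
have sep1 : forall pq : R * R, exists c : A, pq.1 < pq.2 ->
  (forall x : S, h x <= pq.1 -> proj1_sig x c) /\ (forall x : S, proj1_sig x c -> h x < pq.2).
  move=> [p q] /=; have [pq|qp] := ltP p q.
    by have [c Hc] := sep _ hc _ _ pq; exists c.
  by exists \top%O => pq; exfalso; lra.
have [c Hc] := choice sep1; exists (fun p q => c (p, q)) => p q; exact: (Hc (p, q)).
Qed.

Lemma fE_surj (hA : @sigma_complete d A) (g : S -> R[i]) : stone_continuous g ->
  exists2 E : R -> R -> A, bounded_complex_spectral_family E & fE E = g.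
Proof.
move=> cg; have pg := cont_pcont cg.
have [M HM] := pcont_bounded pg.
pose h1 x := complex.Re (g x); pose h2 x := complex.Im (g x).
have hM1 : forall x, `|h1 x| <= M.
  by move=> x; apply: le_trans (Re_le _) _; rewrite -lecR -rnE.
have hM2 : forall x, `|h2 x| <= M.
  by move=> x; apply: le_trans (Im_le _) _; rewrite -lecR -rnE.
have hc1 : forall (x : S) (e : R), 0 < e ->
  exists2 a : A, proj1_sig x a & forall y : S, proj1_sig y a -> `|h1 y - h1 x| < e.
  move=> x e e0; have [a xa Ha] := pg x e e0; exists a => // y ya.
  by rewrite /h1 -ReB; apply: le_lt_trans (Re_le _) _; exact: Ha.
have hc2 : forall (x : S) (e : R), 0 < e ->
  exists2 a : A, proj1_sig x a & forall y : S, proj1_sig y a -> `|h2 y - h2 x| < e.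
  move=> x e e0; have [a xa Ha] := pg x e e0; exists a => // y ya.
  by rewrite /h2 -ImB; apply: le_lt_trans (Im_le _) _; exact: Ha.
have [c1 Hc1] := real_sep _ hc1; have [c2 Hc2] := real_sep _ hc2.
have [glb glbP] := choice (fun u : nat -> A => (hA u).2).
pose E1 := E1c c1 glb; pose E2 := E1c c2 glb.
pose E l mu := (E1 l `&` E2 mu)%O.
have m1 := E1_mono _ _ _ Hc1 glbP; have m2 := E1_mono _ _ _ Hc2 glbP.
have rc1 := E1_rc _ _ _ Hc1 glbP; have rc2 := E1_rc _ _ _ Hc2 glbP.
have bot1 := E1_bot _ _ hM1 _ _ Hc1 glbP; have bot2 := E1_bot _ _ hM2 _ _ Hc2 glbP.
have top1 := E1_top _ _ hM1 _ _ Hc1 glbP; have top2 := E1_top _ _ hM2 _ _ Hc2 glbP.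
have mle1 := E1_mem_le _ _ _ Hc1 glbP; have mle2 := E1_mem_le _ _ _ Hc2 glbP.
have mgt1 := E1_mem_gt _ _ _ Hc1 glbP; have mgt2 := E1_mem_gt _ _ _ Hc2 glbP.
have Emin : forall (F : R -> A), (forall l l', l <= l' -> (F l <= F l')%O) ->
    forall l l', (F l `&` F l')%O = F (Num.min l l').
  move=> F Fm l l'; have [ll'|l'l] := leP l l'.
    exact: (meet_l (Fm _ _ ll')).
  exact: (meet_r (Fm _ _ (ltW l'l))).
have Mlt : - M - 1 < - M by lra.
have Mgt : M < M + 1 by lra.
exists E.
  split.
    split.
    - move=> l1 l2 n1 n2; rewrite /E -(Emin E1 m1) -(Emin E2 m2).
      by rewrite -!meetA (meetCA (E2 l2)).
    - move=> l1 l2; split.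
        by move=> _ [n1 h1' [n2 h2' <-]]; apply: leI2; [apply: m1|apply: m2]; exact: ltW.
      move=> z Hz; rewrite lexI; apply/andP; split.
        apply: rc1 => l' hl'; apply: (le_trans _ (leIl (E1 l') (E2 (l2 + 1)))).
        by apply: Hz; exists l' => //; exists (l2 + 1) => //=; rewrite ltrDl.
      apply: rc2 => l' hl'; apply: (@le_trans _ _ (E1 (l1 + 1) `&` E2 l')%O); last exact: leIr.
      by apply: Hz; exists (l1 + 1) => /=; rewrite ?ltrDl //; exists l'.
    - split => l2; split; [by move=> *; exact: le0x| |by move=> *; exact: le0x|].
        move=> z Hz; have := Hz (E (- M - 1) l2) (ex_intro2 _ _ (- M - 1) I erefl).
        by rewrite /E /E1 /E2 bot1 // meet0x.
      move=> z Hz; have := Hz (E l2 (- M - 1)) (ex_intro2 _ _ (- M - 1) I erefl).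
      by rewrite /E /E1 /E2 bot2 // meetx0.
    - split; first by move=> *; exact: lex1.
      move=> z Hz.
      have hm : [set E l1 l2 | l1 in setT & l2 in setT] (E (M + 1) (M + 1)).
        by exists (M + 1) => //; exists (M + 1).
      by have := Hz _ hm; rewrite /E /E1 /E2 top1 // top2 // meetx1.
  exists (- M - 1), (M + 1); split.
    move=> l1 l2 [h|h]; rewrite /E /E1 /E2.
      by rewrite bot1 ?meet0x //; lra.
    by rewrite bot2 ?meetx0 //; lra.
  by move=> l1 l2 [h h']; rewrite /E /E1 /E2 top1 ?top2 ?meetx1 //; lra.
apply/funext => x.
have e1 : fE1 E x = h1 x.
  rewrite /fE1; apply: inf_eq.
    move=> l hl; exists (M + 1); apply/(di_meetE _ _ (ptdi x)); split.
      exact: mgt1.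
    by rewrite /E2 top2 //; exact: di_top (ptdi x).
  by move=> l [mu /(di_meetE _ _ (ptdi x)) [hx _]]; exact: mle1 hx.
have e2 : fE2 E x = h2 x.
  rewrite /fE2; apply: inf_eq.
    move=> l hl; exists (M + 1); apply/(di_meetE _ _ (ptdi x)); split.
      by rewrite /E1 top1 //; exact: di_top (ptdi x).
    exact: mgt2.
  by move=> l [mu /(di_meetE _ _ (ptdi x)) [_ hx]]; exact: mle2 hx.
by rewrite /fE e1 e2 /h1 /h2; case: (g x).
Qed.

End Surj3.

Theorem theorem2p23 (R : realType) (d : Order.disp_t) (A : ctbDistrLatticeType d)
    (hA : @sigma_complete d A) :
  [/\ (* f_* maps S_b(C, A) into C(Q(A)) *)
      (forall E : R -> R -> A, bounded_complex_spectral_family E ->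
         stone_continuous (fE E)),
      (* f_* is injective on S_b(C, A) *)
      (forall E F : R -> R -> A,
         bounded_complex_spectral_family E -> bounded_complex_spectral_family F ->
         fE E = fE F -> E = F),
      (* f_* is surjective onto C(Q(A)) *)
      (forall g : stone_spectrum A -> R[i], stone_continuous g ->
         exists2 E : R -> R -> A, bounded_complex_spectral_family E & fE E = g)
    & (* C(Q(A)) is an abelian C*-algebra, so the transported structure   *)
      (* on S_b(C, A) is an abelian C*-algebra *-isomorphic to it via f_* *)
      function_Cstar_algebra (@stone_continuous d A R)].
Proof.
split.
- exact: fE_cont.
- exact: fE_inj.
- exact: fE_surj.
- exact: cstar_part.
Qed.
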